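(* Let $s\ge1$, let $n_1\le\dots\le n_s\le n$ be nonnegative integers, $\vec n=(n_1,\dots,n_s)$, let $r\ge1$ and let $\vec k^1,\dots,\vec k^r$ be vectors of $s$ nonnegative integers, $\vec k^j=(k^j_1,\dots,k^j_s)$. There are real numbers $f_\pi$, $\pi\in\Theta_r$, depending only on $\pi$, $(\vec k^j)_j$ and $\vec n$, such that for every probability measure $\rho$ on some $\mathbb{Y}_m$ and every $\sigma_1,\dots,\sigma_r\in S_\infty$ with pairwise disjoint supports, $$\kappa^{F[\vec k,\vec n]}_{\rho,r}(\sigma_1,\dots,\sigma_r)=\sum_{\pi\in\Theta_r}f_\pi\,\kappa_{\rho,|\pi|}\Big(\prod_{j\in B_1}\sigma_j,\dots,\prod_{j\in B_{|\pi|}}\sigma_j\Big),$$ where $\pi=\{B_1,\dots,B_{|\pi|}\}$, and $f_\pi=O(n^\beta)$ as $n\to\infty$ with $\beta=\sum_{j=1}^r\sum_{i=1}^sk^j_i+|\pi|-r$.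
   Context: $\Theta_r$ is the lattice of set partitions of $\{1,\dots,r\}$, $|\pi|$ the number of blocks. Generalized falling factorial: for $\vec n=(n_1\le\dots\le n_s)$ and $\vec k=(k_1,\dots,k_s)$, $(\vec n\downarrow\vec k)=\prod_{i=1}^s(n_i-\sum_{j<i}k_j)_{k_i}$ where $(y)_k=y(y-1)\cdots(y-k+1)$. For a probability measure $\rho$ on $\mathbb{Y}_m$, $M_\rho(\sigma)=\sum_{\lambda\in\mathbb{Y}_m}\rho(\lambda)\chi_\lambda(\tau)/\dim\lambda$ if $\sigma\in S_\infty$ is conjugate to $\tau\in S_m$, else $0$. Permutation-cumulant (for permutations with disjoint supports): $\kappa_{\rho,r}(\tau_1,\dots,\tau_r)=\sum_{\pi\in\Theta_r}(-1)^{|\pi|-1}(|\pi|-1)!\prod_{B\in\pi}M_\rho(\prod_{j\in B}\tau_j)$. Falling cumulant: $\kappa^{F[\vec k,\vec n]}_{\rho,r}(\sigma_1,\dots,\sigma_r)=\sum_{\pi\in\Theta_r}(-1)^{|\pi|-1}(|\pi|-1)!\prod_{B\in\pi}\big(\vec n\downarrow\sum_{j\in B}\vec k^j\big)M_\rho(\prod_{j\in B}\sigma_j)$. *)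

(* Defs.v *)
From HB Require Import structures.
From mathcomp Require Import all_boot all_order all_algebra all_fingroup all_solvable all_field all_character.
From Stdlib Require Import ClassicalEpsilon.
Set Implicit Arguments. Unset Strict Implicit. Unset Printing Implicit Defensive.
Import Order.TTheory GRing.Theory Num.Theory.
Local Open Scope ring_scope.

(* Elements of S_infinity are represented as functions nat -> nat which are
   bijective and move only finitely many points. *)
Definition finitary (f : nat -> nat) : Prop :=
  bijective f /\ exists N : nat, forall x, (N <= x)%N -> f x = x.

Definition in_supp (f : nat -> nat) (x : nat) : Prop := f x <> x.

Definition ext_perm (m : nat) (t : 'S_m) (x : nat) : nat :=
  match ltnP x m with
  | LtnNotGeq h => val (t (Ordinal h))
  | _ => x
  end.

Definition conj_to (m : nat) (f : nat -> nat) (t : 'S_m) : Prop :=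
  exists g : nat -> nat, finitary g /\ forall x, f (g x) = g (ext_perm t x).

Definition SymG (m : nat) := [set: 'S_m]%G.

(* probability measures on the irreducible characters of S_m (= Y_m) *)
Definition is_prob (m : nat) (rho : Iirr (SymG m) -> algC) : Prop :=
  (forall i, 0 <= rho i) /\ \sum_i rho i = 1.

Definition Mrho (m : nat) (rho : Iirr (SymG m) -> algC) (f : nat -> nat) : algC :=
  match excluded_middle_informative (exists t : 'S_m, conj_to f t) with
  | left _ =>
      let t := epsilon (inhabits (1%g : 'S_m)) (fun t => conj_to f t) in
      \sum_i rho i * ('chi[SymG m]_i t / 'chi[SymG m]_i 1%g)
  | right _ => 0
  end.

Definition prodB (r : nat) (sigma : 'I_r -> nat -> nat) (B : {set 'I_r}) : nat -> nat :=
  foldr (fun j g => sigma j \o g) id (enum B).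

Definition Theta (r : nat) (pi : {set {set 'I_r}}) : bool := partition pi [set: 'I_r].

Definition cum (r : nat) (u : {set 'I_r} -> algC) : algC :=
  \sum_(pi : {set {set 'I_r}} | Theta pi)
     (-1) ^+ (#|pi|.-1) * (#|pi|.-1)`!%:R * \prod_(B in pi) u B.

Definition kappa (m : nat) (rho : Iirr (SymG m) -> algC) (p : nat)
  (tau : 'I_p -> nat -> nat) : algC :=
  cum (fun B => Mrho rho (prodB tau B)).

Definition ffact (y : algC) (k : nat) : algC := \prod_(l < k) (y - l%:R).

Definition gffact (s : nat) (nv K : 'I_s -> nat) : algC :=
  \prod_(i < s) ffact ((nv i)%:R - (\sum_(j < s | (j < i)%N) K j)%:R) (K i).

Definition falling_kappa (s r : nat) (k : 'I_r -> 'I_s -> nat) (nv : 'I_s -> nat)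
  (m : nat) (rho : Iirr (SymG m) -> algC) (sigma : 'I_r -> nat -> nat) : algC :=
  cum (fun B => gffact nv (fun i => \sum_(j in B) k j i) * Mrho rho (prodB sigma B)).

Definition kappa_blocks (r : nat) (m : nat) (rho : Iirr (SymG m) -> algC)
  (sigma : 'I_r -> nat -> nat) (pi : {set {set 'I_r}}) : algC :=
  @kappa m rho #|pi| (fun i => prodB sigma (@enum_val _ (mem pi) i)).

Definition nondecr (s : nat) (nv : 'I_s -> nat) : Prop :=
  forall i j : 'I_s, (i <= j)%N -> (nv i <= nv j)%N.

(* Main.v *)
Require Import Defs.
From HB Require Import structures.
From mathcomp Require Import all_boot all_order all_algebra all_fingroup all_solvable all_field all_character.
Import Order.TTheory GRing.Theory Num.Theory.
Local Open Scope ring_scope.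
From mathcomp Require Import zify.
From Stdlib Require Import FunctionalExtensionality.

Module Aux.
Set Implicit Arguments. Unset Strict Implicit. Unset Printing Implicit Defensive.

Definition refine (r : nat) (sg pi : {set {set 'I_r}}) : bool :=
  [forall B in sg, [exists C in pi, B \subset C]].

Section Merged.
Variables (r : nat) (sg : {set {set 'I_r}}).
Hypothesis Hsg : Theta sg.
Local Notation p := #|sg|.
Definition ev (i : 'I_p) : {set 'I_r} := @enum_val _ (mem sg) i.
Definition UU (D : {set 'I_p}) : {set 'I_r} := \bigcup_(i in D) ev i.
Definition VV (C : {set 'I_r}) : {set 'I_p} := [set i | ev i \subset C].

Lemma ev_in i : ev i \in sg.
Proof. exact: enum_valP. Qed.

Lemma ev_inj : injective ev.
Proof. exact: enum_val_inj. Qed.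

Lemma ev_n0 i : ev i != set0.
Proof. exact: (partition_neq0 Hsg (ev_in i)). Qed.

Lemma ev_disj i j x : x \in ev i -> x \in ev j -> i = j.
Proof.
move=> xi xj; apply: ev_inj.
have tI := partition_trivIset Hsg.
by rewrite -(def_pblock tI (ev_in i) xi) (def_pblock tI (ev_in j) xj).
Qed.

Lemma ev_cover x : exists i, x \in ev i.
Proof.
have tI := partition_trivIset Hsg.
have xc : x \in cover sg by rewrite (cover_partition Hsg) inE.
have Pb := pblock_mem xc.
exists (enum_rank_in Pb (pblock sg x)).
by rewrite /ev enum_rankK_in // mem_pblock.
Qed.

Lemma VU D : VV (UU D) = D.
Proof.
apply/setP=> i; rewrite inE; apply/idP/idP; last first.
  by move=> iD; apply: (bigcup_max i).
move=> sub; have /set0Pn[x xi] := ev_n0 i.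
have := subsetP sub x xi => /bigcupP[j jD xj].
by rewrite (ev_disj xi xj).
Qed.

Lemma UU_inj : injective UU.
Proof. by move=> D D' e; rewrite -(VU D) -(VU D') e. Qed.

Lemma UV (pi : {set {set 'I_r}}) C : Theta pi -> refine sg pi -> C \in pi -> UU (VV C) = C.
Proof.
move=> Hpi Href Cpi; apply/setP=> x; apply/idP/idP.
  by move=> /bigcupP[i]; rewrite inE => /subsetP; apply.
move=> xC; have [i xi] := ev_cover x.
apply/bigcupP; exists i => //; rewrite inE.
have /existsP[C' /andP[C'pi sub]] := forall_inP Href _ (ev_in i).
have tI := partition_trivIset Hpi.
by rewrite -(def_pblock tI Cpi xC) (def_pblock tI C'pi (subsetP sub x xi)).
Qed.

Definition Phi (rho : {set {set 'I_p}}) := [set UU D | D in rho].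
Definition Psi (pi : {set {set 'I_r}}) := [set VV C | C in pi].

Lemma PsiPhi rho : Psi (Phi rho) = rho.
Proof.
rewrite /Psi /Phi -imset_comp; apply/setP=> D; apply/imsetP/idP.
  by move=> [D' D'in ->] /=; rewrite VU.
by move=> Din; exists D => //=; rewrite VU.
Qed.

Lemma PhiPsi pi : Theta pi -> refine sg pi -> Phi (Psi pi) = pi.
Proof.
move=> Hpi Href; rewrite /Psi /Phi -imset_comp; apply/setP=> C; apply/imsetP/idP.
  by move=> [C' C'in ->] /=; rewrite (UV Hpi Href).
by move=> Cin; exists C => //=; rewrite (UV Hpi Href).
Qed.

Lemma Phi_Theta rho : Theta rho -> Theta (Phi rho) && refine sg (Phi rho).
Proof.
move=> Hrho; have tI := partition_trivIset Hrho.
have cov : forall i, i \in cover rho by move=> i; rewrite (cover_partition Hrho) inE.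
apply/andP; split; last first.
  apply/forall_inP=> B Bsg; apply/existsP.
  have Pb := Bsg; set i := enum_rank_in Pb B.
  have ei : ev i = B by rewrite /ev enum_rankK_in.
  exists (UU (pblock rho i)); rewrite imset_f ?pblock_mem //=.
  by rewrite -ei; apply: (bigcup_max i); rewrite // mem_pblock.
apply/and3P; split.
- apply/eqP/setP=> x; rewrite inE; have [i xi] := ev_cover x.
  apply/bigcupP; exists (UU (pblock rho i)); first by rewrite imset_f ?pblock_mem.
  by apply/bigcupP; exists i; rewrite // mem_pblock.
- apply/trivIsetP=> _ _ /imsetP[D Din ->] /imsetP[D' D'in ->] ne.
  apply/pred0P=> x /=; apply/negbTE/negP => /andP[/bigcupP[i iD xi] /bigcupP[j jD xj]].
  have eij := ev_disj xi xj; subst j.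
  have e1 := def_pblock tI Din iD; have e2 := def_pblock tI D'in jD.
  by move: ne; rewrite -e1 -e2 eqxx.
- apply/negP=> /imsetP[D Din e0].
  have /set0Pn[i iD] := partition_neq0 Hrho Din.
  have /set0Pn[x xi] := ev_n0 i.
  have : x \in UU D by apply/bigcupP; exists i.
  by rewrite -e0 inE.
Qed.

Lemma Phi_Theta_inv rho : Theta (Phi rho) -> Theta rho.
Proof.
move=> H; have tI := partition_trivIset H.
apply/and3P; split.
- apply/eqP/setP=> i; rewrite inE.
  have /set0Pn[x xi] := ev_n0 i.
  have : x \in cover (Phi rho) by rewrite (cover_partition H) inE.
  move=> /bigcupP[_ /imsetP[D Din ->] /bigcupP[j jD xj]].
  rewrite (ev_disj xi xj); apply/bigcupP; exists D => //.
- apply/trivIsetP=> D D' Din D'in ne.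
  apply/pred0P=> i /=; apply/negbTE/negP => /andP[iD iD'].
  have /set0Pn[x xi] := ev_n0 i.
  have xD : x \in UU D by apply/bigcupP; exists i.
  have xD' : x \in UU D' by apply/bigcupP; exists i.
  have := def_pblock tI (imset_f UU Din) xD.
  rewrite (def_pblock tI (imset_f UU D'in) xD') => /UU_inj e.
  by move: ne; rewrite e eqxx.
- apply/negP=> s0; have := partition0 H.
  have -> : set0 \in Phi rho.
    have <- : UU set0 = set0 by rewrite /UU big_set0.
    exact: imset_f.
  by [].
Qed.

Lemma merged (u : {set 'I_r} -> algC) :
  cum (fun D : {set 'I_p} => u (UU D)) =
  \sum_(pi : {set {set 'I_r}} | Theta pi && refine sg pi)
     (-1) ^+ (#|pi|.-1) * (#|pi|.-1)`!%:R * \prod_(C in pi) u C.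
Proof.
rewrite (reindex_onto Phi Psi); last by move=> pi /andP[H1 H2]; rewrite PhiPsi.
rewrite /cum; apply: eq_big => [rho|rho Hrho].
  rewrite PsiPhi eqxx andbT; apply/idP/idP; first exact: Phi_Theta.
  by move=> /andP[H _]; apply: Phi_Theta_inv H.
rewrite /Phi card_imset; last exact: UU_inj.
by rewrite big_imset //; move=> D D' _ _; apply: UU_inj.
Qed.

End Merged.

Section Fold.
Variables (I : eqType) (f : I -> nat -> nat).
Hypothesis H1 : forall i i' y, i != i' -> f i y != y -> f i' y = y.
Hypothesis H2 : forall i y, f i y != y -> f i (f i y) != f i y.

Lemma foldr_fix (l : seq I) x : (forall j, j \in l -> f j x = x) ->
  foldr (fun j g => f j \o g) id l x = x.
Proof.
elim: l => //= a l IH H.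
by rewrite IH ?H ?mem_head // => j jl; apply: H; rewrite inE jl orbT.
Qed.

Lemma foldr_move (l : seq I) x j : uniq l -> j \in l -> f j x != x ->
  foldr (fun j g => f j \o g) id l x = f j x.
Proof.
elim: l => //= a l IH /andP[al ul]; rewrite inE => /orP[/eqP ejl|jl] mv /=.
  subst j; rewrite foldr_fix // => j' j'l; apply: (H1 (i := a)) => //.
  by apply: contraNneq al => ->.
rewrite IH //; apply: (H1 (i := j)); last exact: H2.
by apply: contraNneq al => <-.
Qed.
End Fold.

Lemma prodB_fix r (sigma : 'I_r -> nat -> nat) (B : {set 'I_r}) x :
  (forall j, j \in B -> sigma j x = x) -> prodB sigma B x = x.
Proof. by move=> H; apply: foldr_fix => j; rewrite mem_enum; apply: H. Qed.

Lemma prodB_move r (sigma : 'I_r -> nat -> nat) (B : {set 'I_r}) x j :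
  (forall i i' y, i != i' -> sigma i y != y -> sigma i' y = y) ->
  (forall i y, sigma i y != y -> sigma i (sigma i y) != sigma i y) ->
  j \in B -> sigma j x != x -> prodB sigma B x = sigma j x.
Proof.
by move=> H1 H2 jB mv; apply: foldr_move => //; rewrite ?enum_uniq ?mem_enum.
Qed.

Section Tau.
Variables (r : nat) (sg : {set {set 'I_r}}) (Hsg : Theta sg) (sigma : 'I_r -> nat -> nat).
Hypothesis H1 : forall i i' y, i != i' -> sigma i y != y -> sigma i' y = y.
Hypothesis H2 : forall i y, sigma i y != y -> sigma i (sigma i y) != sigma i y.
Definition tau (i : 'I_#|sg|) := prodB sigma (ev i).

Lemma tau_mv i y : tau i y != y -> exists2 j, j \in ev i & sigma j y != y /\ tau i y = sigma j y.
Proof.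
move=> mv; case: (boolP [exists j in ev i, sigma j y != y]).
  move=> /exists_inP[j jB mj]; exists j => //; split => //.
  exact: prodB_move.
move=> /exists_inPn H; move: mv; rewrite /tau prodB_fix ?eqxx // => j jB.
by apply/eqP; rewrite -[_ == _]negbK H.
Qed.

Lemma tau_H1 i i' y : i != i' -> tau i y != y -> tau i' y = y.
Proof.
move=> ne /tau_mv[j jB [mj _]]; rewrite /tau prodB_fix // => j' j'B.
apply: (H1 (i := j)) => //; apply: contraNneq ne => ejj.
by subst j'; rewrite (ev_disj Hsg jB j'B).
Qed.

Lemma tau_H2 i y : tau i y != y -> tau i (tau i y) != tau i y.
Proof.
move=> /tau_mv[j jB [mj ->]].
by rewrite /tau (prodB_move H1 H2 jB (H2 mj)); exact: H2.
Qed.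

Lemma prodB_tau D : prodB tau D =1 prodB sigma (@UU r sg D).
Proof.
move=> x; case: (boolP [exists j in @UU r sg D, sigma j x != x]).
  move=> /exists_inP[j /bigcupP[i iD ji] mj].
  have ti : tau i x = sigma j x by rewrite /tau (prodB_move H1 H2 ji mj).
  rewrite (prodB_move H1 H2 _ mj); last by apply/bigcupP; exists i.
  rewrite (@prodB_move _ tau D x i tau_H1 tau_H2 iD); first by [].
  by rewrite ti.
move=> /exists_inPn H.
have fx : forall j, j \in @UU r sg D -> sigma j x = x.
  by move=> j jU; apply/eqP; rewrite -[_ == _]negbK H.
rewrite (prodB_fix fx) prodB_fix // => i iD; rewrite /tau prodB_fix // => j ji.
by apply: fx; apply/bigcupP; exists i.
Qed.
End Tau.


Lemma big_optionT (T : finType) (h : option T -> algC) :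
  \sum_(c : option T) h c = h None + \sum_(b : T) h (Some b).
Proof.
rewrite (bigD1 None) //=; congr (_ + _).
rewrite (reindex_omap Some id) //=; last by case.
by apply: eq_bigl => b /=; rewrite eqxx.
Qed.



Lemma rank_prod (T : finType) (rk : T -> nat) (h : nat -> algC) :
  injective rk -> forall Y : {set T},
  \prod_(a in Y) h #|[set b in Y | (rk b < rk a)%N]| = \prod_(l < #|Y|) h l.
Proof.
move=> rinj Y; have [n] := ubnP #|Y|; elim: n Y => // n IH Y.
rewrite ltnS => Yn.
case: (set_0Vmem Y) => [->|[a0 a0Y]]; first by rewrite big_set0 cards0 big_ord0.
pose am := [arg max_(a > a0 in Y) rk a].
have amY : am \in Y by rewrite /am; case: arg_maxnP.
have amM : forall b, b \in Y -> (rk b <= rk am)%N by rewrite /am; case: arg_maxnP.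
have cY : #|Y| = #|Y :\ am|.+1 by rewrite (cardsD1 am Y) amY.
rewrite (bigD1 am) //= cY big_ord_recr /= mulrC; congr (_ * _); last first.
  have -> : [set b in Y | (rk b < rk am)%N] = Y :\ am.
    apply/setP=> b; rewrite !inE; case: (eqVneq b am) => [->|ne] /=; first by rewrite ltnn andbF.
    case bY: (b \in Y) => //=; rewrite ltn_neqAle amM // andbT.
    by apply: contra_neq ne => /rinj.
  by [].
rewrite -IH; last by rewrite -ltnS -cY.
apply: eq_big => [b|b /andP[bY ne]]; first by rewrite !inE andbC.
congr h; apply: eq_card => c; rewrite !inE.
case: (eqVneq c am) => [->|] //=.
by rewrite ltnNge amM // andbF.
Qed.

Lemma level_prod (s : nat) (T : finType) (lev : T -> 'I_s) (rk : T -> nat)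
  (xs : 'I_s -> algC) :
  injective rk -> (forall a b, (lev a < lev b)%N -> (rk a < rk b)%N) ->
  forall X : {set T},
  \prod_(a in X) (xs (lev a) - (#|[set b in X | (rk b < rk a)%N]|)%:R) =
  \prod_(i < s) ffact (xs i - (#|[set b in X | (lev b < i)%N]|)%:R)
                      #|[set b in X | lev b == i]|.
Proof.
move=> rinj mono X.
rewrite (partition_big lev xpredT) //; apply: eq_bigr => i _.
set c := #|[set b in X | (lev b < i)%N]|.
transitivity (\prod_(l < #|[set b in X | lev b == i]|) (xs i - (c + l)%:R)); last first.
  by apply: eq_bigr => l _; rewrite natrD opprD addrA.
rewrite -(rank_prod (fun l => xs i - (c + l)%:R) rinj).
rewrite (eq_bigl (fun a => a \in [set b in X | lev b == i])); last by move=> a; rewrite inE.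
apply: eq_bigr => a; rewrite inE => /andP[aX /eqP lai]; subst i.
congr (_ - _%:R).
have -> : [set b in X | (rk b < rk a)%N] = [set b in X | (lev b < lev a)%N] :|: [set b in [set b0 in X | lev b0 == lev a] | (rk b < rk a)%N].
  apply/setP=> b; rewrite !inE.
  case bX: (b \in X) => //=; rewrite -val_eqE /=.
  case: (ltngtP (lev b) (lev a)) => [lt|gt|eq] /=.
  - by rewrite mono.
  - by apply/negbTE; rewrite -leqNgt ltnW // mono.
  - by [].
rewrite cardsU.
have -> : [set b in X | (lev b < lev a)%N] :&: [set b in [set b0 in X | lev b0 == lev a] | (rk b < rk a)%N] = set0.
  apply/setP=> b; rewrite !inE -val_eqE /=; apply/negbTE.
  by case: (ltngtP (lev b) (lev a)) => //=; rewrite !andbF.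
by rewrite cards0 subn0.
Qed.


Section Atoms.
Variables (s r : nat) (k : 'I_r -> 'I_s -> nat).
Definition Kt := (\sum_(j < r) \sum_(i < s) k j i)%N.
Definition Mb := Kt.+1.
Definition AT := ('I_s * 'I_r * 'I_Mb)%type.
Definition lev (a : AT) : 'I_s := a.1.1.
Definition grp (a : AT) : 'I_r := a.1.2.
Definition inA (a : AT) : bool := (a.2 < k (grp a) (lev a))%N.
Definition rk (a : AT) : nat := ((lev a * r + grp a) * Mb + a.2)%N.

Lemma k_lt j i : (k j i < Mb)%N.
Proof.
rewrite ltnS /Kt (bigD1 j) //= (bigD1 i) //= -addnA; exact: leq_addr.
Qed.

Lemma rk_inj : injective rk.
Proof.
move=> [[i j] l] [[i' j'] l'] /=; rewrite /rk /lev /grp /= => e.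
have Mp : (0 < Mb)%N by [].
have e2 : (l : nat) = l'.
  by move: (congr1 (modn^~ Mb) e); rewrite !modnMDl !modn_small.
have e1 : ((i * r + j) = (i' * r + j'))%N.
  by move: (congr1 (divn^~ Mb) e); rewrite !divnMDl // !divn_small // !addn0.
have ej : (j : nat) = j'.
  by move: (congr1 (modn^~ r) e1); rewrite !modnMDl !modn_small.
have ei : (i : nat) = i'.
  have rp : (0 < r)%N by case: r j {e e1 ej} => // -[].
  by move: (congr1 (divn^~ r) e1); rewrite !divnMDl // !divn_small // !addn0.
by congr (_, _, _); apply: val_inj.
Qed.

Lemma rk_mono a b : (lev a < lev b)%N -> (rk a < rk b)%N.
Proof.
rewrite /rk => lt.
have ha := ltn_ord a.2; have hg := ltn_ord (grp a).
have h1 : ((lev a * r + grp a) * Mb + a.2 < (lev a * r + grp a).+1 * Mb)%N.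
  by rewrite mulSn addnC ltn_add2r.
apply: (leq_trans h1); apply: (leq_trans _ (leq_addr _ _)).
rewrite leq_mul2r; apply/orP; right.
have : ((lev a).+1 * r <= lev b * r)%N by rewrite leq_mul2r lt orbT.
rewrite mulSn; lia.
Qed.

Definition AB (B : {set 'I_r}) : {set AT} := [set a | inA a && (grp a \in B)].

Lemma card_lev_eq B i : #|[set b in AB B | lev b == i]| = (\sum_(j in B) k j i)%N.
Proof.
rewrite -sum1_card big_mkcond /=.
transitivity (\sum_(ij : 'I_s * 'I_r) \sum_(l : 'I_Mb)
   (if [&& (l < k ij.2 ij.1)%N, ij.2 \in B & ij.1 == i] then 1 else 0))%N.
  rewrite pair_bigA; apply: eq_bigr => -[[i' j] l] _ /=.
  by rewrite !inE /inA /lev /grp /= andbA.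
rewrite -(pair_bigA _ (fun i' j => \sum_(l : 'I_Mb) (if [&& (l < k j i')%N, j \in B & i' == i] then 1 else 0))%N) /=.
rewrite (bigD1 i) //= [X in (_ + X)%N]big1 ?addn0; last first.
  move=> i' ne; apply: big1 => j _; apply: big1 => l _.
  by rewrite (negbTE ne) !andbF.
rewrite [RHS]big_mkcond /=; apply: eq_bigr => j _.
rewrite eqxx; case: (j \in B) => /=; last by rewrite big1 //= => l _; rewrite andbF.
rewrite -big_mkcond /= (eq_bigl (fun l : 'I_Mb => (l < k j i)%N)); last by move=> l; rewrite andbT.
rewrite (big_ord_narrow (ltnW (k_lt j i))) /=.
by rewrite sum1_card card_ord.
Qed.


Lemma card_lev_lt B i : #|[set b in AB B | (lev b < i)%N]| =
   (\sum_(i' < s | (i' < i)%N) \sum_(j in B) k j i')%N.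
Proof.
rewrite -sum1_card (partition_big lev (fun i' : 'I_s => (i' < i)%N)); last first.
  by move=> b; rewrite inE => /andP[].
apply: eq_bigr => i' lt; rewrite -card_lev_eq -sum1_card.
apply: eq_bigl => b; rewrite !inE.
by case: eqP => [->|]; rewrite ?lt ?andbT ?andbF.
Qed.

Lemma gffact_atoms (nv : 'I_s -> nat) (B : {set 'I_r}) :
  gffact nv (fun i => \sum_(j in B) k j i)%N =
  \prod_(a in AB B) ((nv (lev a))%:R - (#|[set b in AB B | (rk b < rk a)%N]|)%:R).
Proof.
rewrite (level_prod (fun i => (nv i)%:R) rk_inj rk_mono) /gffact.
apply: eq_bigr => i _; by rewrite card_lev_eq card_lev_lt.
Qed.

Definition w0 (nv : 'I_s -> nat) (a : AT) (c : option AT) : algC :=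
  if inA a then (if c is Some b then (if inA b && (rk b < rk a)%N then -1 else 0)
                 else (nv (lev a))%:R)
  else (if c is Some _ then 0 else 1).
Definition Wt nv (F : {ffun AT -> option AT}) : algC := \prod_(a : AT) w0 nv a (F a).
Definition okp (pi : {set {set 'I_r}}) (a : AT) (c : option AT) : bool :=
  if c is Some b then pblock pi (grp a) == pblock pi (grp b) else true.
Definition compat pi (F : {ffun AT -> option AT}) : bool := [forall a, okp pi a (F a)].

Lemma prod_bool (T : finType) (P : pred T) :
  \prod_(a : T) ((P a)%:R : algC) = ([forall a, P a])%:R.
Proof.
case: (boolP [forall a, P a]) => [/forallP H|/forallPn[a Pa]].
  by apply: big1 => a _; rewrite H.
by rewrite (bigD1 a) //= (negbTE Pa) mul0r.
Qed.

Lemma in_pblock (pi : {set {set 'I_r}}) B x : Theta pi -> B \in pi ->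
  (pblock pi x == B) = (x \in B).
Proof.
move=> Hpi Bpi; apply/eqP/idP => [<-|xB]; last first.
  exact: def_pblock (partition_trivIset Hpi) Bpi xB.
by rewrite mem_pblock (cover_partition Hpi) inE.
Qed.

Lemma expand nv pi : Theta pi ->
  \prod_(B in pi) gffact nv (fun i => \sum_(j in B) k j i)%N =
  \sum_(F : {ffun AT -> option AT}) Wt nv F * (compat pi F)%:R.
Proof.
move=> Hpi; symmetry.
rewrite (eq_bigr (fun F : {ffun AT -> option AT} => \prod_a (w0 nv a (F a) * (okp pi a (F a))%:R))); last first.
  by move=> F _; rewrite /Wt /compat -(prod_bool (fun a => okp pi a (F a))) -big_split.
rewrite -(bigA_distr_bigA (fun a c => w0 nv a c * (okp pi a c)%:R)) /=.
under eq_bigr => a _ do rewrite big_optionT /=.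
have tI := partition_trivIset Hpi.
have cv : forall x, x \in cover pi by move=> x; rewrite (cover_partition Hpi) inE.
rewrite (eq_bigr (fun a => if inA a then (nv (lev a))%:R -
    (#|[set b in AB (pblock pi (grp a)) | (rk b < rk a)%N]|)%:R else 1)); last first.
  move=> a _; rewrite /w0; case: (inA a) => /=; last first.
    by rewrite mulr1 big1 ?addr0 // => b _; rewrite mul0r.
  rewrite mulr1; congr (_ + _).
  set S := [set b in AB (pblock pi (grp a)) | (rk b < rk a)%N].
  transitivity (\sum_b - ((((b \in S) : nat)%:R) : algC)).
    apply: eq_bigr => b _; rewrite !inE (eq_pblock _ tI (cv _)).
    by case: (inA b); case: (grp b \in _); case: (rk b < rk a)%N; rewrite /= ?mulr0 ?mul0r ?mulr1 ?oppr0.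
  rewrite sumrN -natr_sum; congr (- _%:R).
  by rewrite -sum1_card [RHS]big_mkcond /=; apply: eq_bigr => b _; case: (_ \in _).
rewrite -big_mkcond /=.
rewrite (partition_big (fun a => pblock pi (grp a)) (mem pi)); last by move=> a _; exact: pblock_mem.
apply: eq_bigr => B Bpi; rewrite gffact_atoms.
apply: eq_big => [a|a /andP[_ /eqP ea]]; first by rewrite !inE in_pblock.
by rewrite ea.
Qed.
End Atoms.


Section Labels.
Variable r : nat.
Definition step (e : 'I_r * 'I_r) (lab : 'I_r -> 'I_r) : 'I_r -> 'I_r :=
  fun x => if lab x == lab e.2 then lab e.1 else lab x.
Definition labs (E : seq ('I_r * 'I_r)) : 'I_r -> 'I_r := foldr step id E.

Lemma card_preim (f : 'I_r -> 'I_r) :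
  #|preim_partition f [set: 'I_r]| = #|f @: [set: 'I_r]|.
Proof.
have -> : preim_partition f [set: 'I_r] =
    (fun v => [set y | f y == v]) @: (f @: [set: 'I_r]).
  rewrite /preim_partition /equivalence_partition -imset_comp.
  apply: eq_imset => x /=; apply/setP => y; rewrite !inE eq_sym //.
apply: card_in_imset => _ _ /imsetP[x _ ->] /imsetP[x' _ ->] /setP e.
by have := e x; rewrite !inE eqxx => /esym/eqP.
Qed.

Lemma card_labs E : (r <= #|labs E @: [set: 'I_r]| + size E)%N.
Proof.
elim: E => [|e E IH] /=.
  by rewrite addn0 card_imset ?cardsT ?card_ord.
apply: (leq_trans IH); rewrite addnS -addSn leq_add2r.
set lab := labs E.
have sub : (lab @: [set: 'I_r]) :\ lab e.2 \subset step e lab @: [set: 'I_r].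
  apply/subsetP=> y; rewrite !inE => /andP[ne /imsetP[x _ ey]]; subst y.
  by apply/imsetP; exists x => //; rewrite /step (negbTE ne).
rewrite (cardsD1 (lab e.2) (lab @: _)); have := subset_leq_card sub.
case: (_ \in _) => /=; lia.
Qed.

Lemma labs_inv1 (pi : {set {set 'I_r}}) E :
  all (fun e => pblock pi e.1 == pblock pi e.2) E ->
  forall x, pblock pi (labs E x) = pblock pi x.
Proof.
elim: E => [|e E IH] //= /andP[/eqP he hE] x; rewrite /step.
case: eqP => [eq|_]; last exact: IH.
by rewrite IH // he -(IH hE e.2) -eq IH.
Qed.

Lemma labs_inv3 E e : e \in E -> labs E e.1 = labs E e.2.
Proof.
elim: E => [|e' E IH] //=; rewrite inE => /orP[/eqP ->|eE]; rewrite /step.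
  by rewrite eqxx; case: eqP.
by rewrite (IH eE).
Qed.

Lemma refine_preim (pi : {set {set 'I_r}}) (f : 'I_r -> 'I_r) : Theta pi ->
  refine (preim_partition f [set: 'I_r]) pi =
  [forall x, forall y, (f x == f y) ==> (pblock pi x == pblock pi y)].
Proof.
move=> Hpi; have tI := partition_trivIset Hpi.
have cv : forall x, x \in cover pi by move=> x; rewrite (cover_partition Hpi) inE.
apply/idP/idP.
  move=> /forall_inP H; apply/forallP=> x; apply/forallP=> y; apply/implyP=> /eqP e.
  have /H /existsP[C /andP[Cpi sub]] : [set z in [set: 'I_r] | f x == f z] \in preim_partition f [set: 'I_r].
    exact: imset_f.
  have xC : x \in C by apply: (subsetP sub); rewrite !inE eqxx.
  have yC : y \in C by apply: (subsetP sub); rewrite !inE e eqxx.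
  by rewrite (def_pblock tI Cpi xC) (def_pblock tI Cpi yC).
move=> H; apply/forall_inP=> B /imsetP[x _ ->]; apply/existsP; exists (pblock pi x).
rewrite pblock_mem //=; apply/subsetP=> y; rewrite !inE /= => e.
have := forallP (forallP H x) y; rewrite e /= => /eqP ->.
by rewrite mem_pblock.
Qed.
End Labels.

Section Sg.
Variables (s r : nat) (k : 'I_r -> 'I_s -> nat).
Local Notation AT := (@AT s r k).
Definition edges (F : {ffun AT -> option AT}) : seq ('I_r * 'I_r) :=
  pmap (fun a => omap (fun b => (grp a, grp b)) (F a)) (enum [set: AT]).
Definition sgF (F : {ffun AT -> option AT}) := preim_partition (labs (edges F)) [set: 'I_r].

Lemma sgF_Theta F : Theta (sgF F).
Proof. exact: preim_partitionP. Qed.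

Lemma compat_edges pi F :
  compat pi F = all (fun e => pblock pi e.1 == pblock pi e.2) (edges F).
Proof.
apply/forallP/allP.
  move=> H e; rewrite mem_pmap => /mapP[a _].
  case Fa: (F a) => [b|] //= [->]; have := H a; rewrite Fa.
  by [].
move=> H a; rewrite /okp; case Fa: (F a) => [b|] //.
apply: (H (grp a, grp b)); rewrite mem_pmap; apply/mapP; exists a; first by rewrite mem_enum inE.
by rewrite Fa.
Qed.

Lemma compat_refine pi F : Theta pi -> compat pi F = refine (sgF F) pi.
Proof.
move=> Hpi; rewrite refine_preim // compat_edges; apply/idP/idP.
  move=> H; apply/forallP=> x; apply/forallP=> y; apply/implyP=> /eqP e.
  by rewrite -(labs_inv1 H x) -(labs_inv1 H y) e.
move=> H; apply/allP=> e eE; have := forallP (forallP H e.1) e.2.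
by rewrite (labs_inv3 eE) eqxx.
Qed.

Lemma card_sgF F : (r <= #|sgF F| + size (edges F))%N.
Proof. by rewrite /sgF card_preim; exact: card_labs. Qed.
End Sg.


Section Bound.
Variables (s r : nat) (k : 'I_r -> 'I_s -> nat).
Local Notation AT := (@AT s r k).
Local Notation FT := {ffun AT -> option AT}.

Definition roots (F : FT) := #|[set a : AT | inA a && (F a == None)]|.

Lemma w0_real (nv : 'I_s -> nat) (a : AT) (c : option AT) : w0 nv a c \is Num.real.
Proof.
rewrite /w0; case: (inA a); case: c => [b|] //; rewrite ?realn ?rpred0 ?rpred1 //.
by case: (_ && _); rewrite ?rpredN ?rpred1 ?rpred0.
Qed.

Lemma Wt_real (nv : 'I_s -> nat) (F : FT) : Wt nv F \is Num.real.
Proof. by apply: rpred_prod => a _; apply: w0_real. Qed.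

Lemma Wt_bound (nv : 'I_s -> nat) (n : nat) (F : FT) : (forall i, (nv i <= n)%N) ->
  `|Wt nv F| <= n%:R ^+ roots F.
Proof.
move=> hn; rewrite /Wt normr_prod /roots -prodr_const.
rewrite (big_mkcond (fun a => a \in _)) /=.
apply: ler_prod => a _; rewrite normr_ge0 /= inE /w0.
case: (inA a); case: (F a) => [b|] //=; rewrite ?normr0 ?normr1 ?ler01 ?lexx //.
  by case: (_ && _); rewrite ?normrN ?normr1 ?normr0 ?ler01 ?lexx.
by rewrite normr_nat ler_nat.
Qed.

Lemma Wt_nz (nv : 'I_s -> nat) (F : FT) : Wt nv F != 0 -> forall a, F a != None -> inA a.
Proof.
move=> nz a; case Fa: (F a) => [b|] // _; apply: contraNT nz => nA.
by rewrite /Wt (bigD1 a) //= /w0 (negbTE nA) Fa mul0r.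
Qed.

Lemma size_edges (F : FT) : size (edges F) = #|[set a : AT | F a != None]|.
Proof.
rewrite size_pmap -sum1_count big_enum_cond -sum1_card.
apply: eq_bigl => a; rewrite !inE /=; by case: (F a).
Qed.

Lemma card_A : #|[set a : AT | inA a]| = Kt k.
Proof.
rewrite -sum1_card (partition_big (@lev s r k) xpredT) //=.
rewrite /Kt exchange_big /=; apply: eq_bigr => i _.
rewrite (eq_bigl (fun j => j \in [set: 'I_r])); last by move=> j; rewrite inE.
rewrite -(card_lev_eq k setT i) -sum1_card; apply: eq_bigl => a.
by rewrite !inE andbT.
Qed.

Lemma roots_le (nv : 'I_s -> nat) (F : FT) : Wt nv F != 0 -> (roots F + size (edges F) <= Kt k)%N.
Proof.
move=> nz; rewrite size_edges -card_A /roots.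
have E := cardsU [set a : AT | inA a && (F a == None)] [set a | F a != None].
have E0 : [set a : AT | inA a && (F a == None)] :&: [set a | F a != None] = set0.
  by apply/setP=> a; rewrite !inE; case: (F a) => [b|] /=; rewrite ?andbF ?andbT.
rewrite E0 cards0 subn0 in E; rewrite -E; apply: subset_leq_card; apply/subsetP=> a; rewrite !inE.
by case/orP=> [/andP[]//|]; exact: Wt_nz nz a.
Qed.
End Bound.


Lemma rearr (a w c p : algC) : a * (w * c * p) = w * (c * (a * p)).
Proof. rewrite !mulrA; congr (_ * _); by rewrite -mulrA mulrC. Qed.

Definition fcoef (s r : nat) (k : 'I_r -> 'I_s -> nat) (nv : 'I_s -> nat)
  (pi : {set {set 'I_r}}) : algC :=
  \sum_(F : {ffun AT k -> option (AT k)} | sgF F == pi) Wt nv F.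


End Aux.
Import Aux.

Theorem mainTheorem8 (s r : nat) (hs : (1 <= s)%N) (hr : (1 <= r)%N)
  (k : 'I_r -> 'I_s -> nat) :
  exists f : ('I_s -> nat) -> {set {set 'I_r}} -> algC,
    (forall nv pi, nondecr nv -> Theta pi -> f nv pi \is Num.real) /\
    (forall nv, nondecr nv ->
      forall (m : nat) (rho : Iirr (SymG m) -> algC), is_prob rho ->
      forall sigma : 'I_r -> nat -> nat,
        (forall j, finitary (sigma j)) ->
        (forall i j, i != j -> forall x, in_supp (sigma i) x -> ~ in_supp (sigma j) x) ->
        falling_kappa k nv rho sigma
        = \sum_(pi : {set {set 'I_r}} | Theta pi) f nv pi * kappa_blocks rho sigma pi) /\
    (forall pi, Theta pi ->
      let beta : int := (\sum_(j < r) \sum_(i < s) k j i)%:Z + #|pi|%:Z - r%:Z in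
      exists (C : algC) (N : nat), forall (n : nat) (nv : 'I_s -> nat),
        (N <= n)%N -> nondecr nv -> (forall i, (nv i <= n)%N) ->
        `|f nv pi| <= C * (n%:R : algC) ^ beta).
Proof.
exists (fun nv pi => fcoef k nv pi); split; [|split].
- by move=> nv pi _ _; apply: rpred_sum => F _; exact: Wt_real.
- move=> nv _ m rho _ sigma hfin hdisj.
  have H1 : forall i i' y, i != i' -> sigma i y != y -> sigma i' y = y.
    move=> i i' y ne mv; case: (eqVneq (sigma i' y) y) => // ne'.
    by exfalso; apply: (hdisj i i' ne y (elimN eqP mv) (elimN eqP ne')).
  have H2 : forall i y, sigma i y != y -> sigma i (sigma i y) != sigma i y.
    move=> i y mv; apply: contra mv => /eqP e; apply/eqP.
    by case: (hfin i) => /bij_inj inj _; apply: inj.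
  have KB : forall sg, Theta sg -> kappa_blocks rho sigma sg =
      \sum_(pi | Theta pi && refine sg pi)
        (-1) ^+ #|pi|.-1 * (#|pi|.-1)`!%:R * \prod_(C in pi) Mrho rho (prodB sigma C).
    move=> sg Hsg; rewrite /kappa_blocks /kappa -(merged Hsg).
    congr cum; apply: functional_extensionality => D; congr Mrho.
    apply: functional_extensionality => x; exact: (prodB_tau Hsg H1 H2 D x).
  rewrite /falling_kappa /cum.
  transitivity (\sum_(F : {ffun AT k -> option (AT k)}) Wt nv F * kappa_blocks rho sigma (sgF F)).
    rewrite (eq_bigr (fun pi => \sum_(F : {ffun AT k -> option (AT k)})
        Wt nv F * ((compat pi F)%:R * ((-1) ^+ #|pi|.-1 * (#|pi|.-1)`!%:R *
           \prod_(C in pi) Mrho rho (prodB sigma C))))); last first.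
      move=> pi Hpi; rewrite big_split /= (expand k nv Hpi) mulr_suml mulr_sumr.
      by apply: eq_bigr => F _; rewrite rearr.
    rewrite exchange_big /=; apply: eq_bigr => F _.
    rewrite -mulr_sumr KB ?sgF_Theta //; congr (_ * _).
    rewrite [RHS]big_mkcondr /=; apply: eq_bigr => pi Hpi.
    by rewrite (compat_refine F Hpi); case: (refine _ _); rewrite ?mul1r ?mul0r.
  symmetry; rewrite (partition_big (@sgF s r k) (fun pi => Theta pi)); last by move=> F _; exact: sgF_Theta.
  apply: eq_bigr => pi Hpi; rewrite /fcoef mulr_suml; apply: eq_big => [F|F /eqP ->] //.
- move=> pi Hpi beta.
  exists (#|{ffun AT k -> option (AT k)}|%:R), 1%N => n nv n1 _ hn.
  rewrite /fcoef; apply: le_trans (ler_norm_sum _ _ _) _.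
  apply: (@le_trans _ _ (\sum_(F : {ffun AT k -> option (AT k)} | sgF F == pi) (n%:R ^ beta : algC))).
    apply: ler_sum => F /eqP sF.
    case: (eqVneq (Wt nv F) 0) => [->|nz]; first by rewrite normr0 exprz_ge0 // ler0n.
    apply: le_trans (Wt_bound F hn) _; rewrite exprnP.
    have n1' : (1 : algC) <= n%:R by rewrite ler1n.
    have h1 := roots_le nz.
    have h2 : (r <= #|pi| + size (edges F))%N by rewrite -sF; exact: card_sgF.
    have eb : beta = (Kt k)%:Z + #|pi|%:Z - r%:Z by [].
    have hd : beta = Posz (roots F + (Kt k + #|pi| - r - roots F))%N.
      rewrite eb; move: (Kt k) (roots F) (size (edges F)) #|pi| h1 h2 => K a b P h1 h2.
      lia.
    rewrite hd -exprnP; apply: ler_weXn2l => //; exact: leq_addr.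
  rewrite sumr_const mulr_natl; apply: ler_wpMn2l; first by rewrite exprz_ge0 // ler0n.
  exact: max_card.
Qed.
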